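(* Let $K\in\mathcal{K}$ and let $L_0\in\mathbb{R}^{q\times n}$ be such that $A_K+DL_0$ is Hurwitz. Define recursively, for $j=0,1,2,\dots$, $P^{j}$ as the solution of $$(A_K+DL_j)^\top P^{j}+P^{j}(A_K+DL_j)+Q_K-\gamma^2L_j^\top L_j=0,$$ and $L_{j+1}=\gamma^{-2}D^\top P^{j}$. Then for every $j\in\mathbb{N}_+$: (1) $A_K+DL_j$ is Hurwitz; (2) $P_K\succeq\cdots\succeq P^{j+1}\succeq P^{j}\succeq\cdots\succeq P^{0}$; (3) $\lim_{j\to\infty}\|P^{j}-P_K\|_F=0$.
   Context: Let $A\in\mathbb{R}^{n\times n}$, $B\in\mathbb{R}^{n\times m}$, $C\in\mathbb{R}^{p\times n}$, $D\in\mathbb{R}^{n\times q}$, $E\in\mathbb{R}^{p\times m}$, $\gamma>0$, with $Q:=C^\top C\succ 0$, $E^\top C=0$, $R:=E^\top E\succ 0$. For $K\in\mathbb{R}^{m\times n}$ set $A_K=A-BK$, $Q_K=Q+K^\top RK$, $T_{zw}(K)(s)=(C-EK)(sI-A+BK)^{-1}D$, and $\mathcal{K}=\{K:\ A_K\text{ Hurwitz},\ \|T_{zw}(K)\|_{\mathcal{H}_\infty}<\gamma\}$, where $\|G\|_{\mathcal{H}_\infty}=\sup_{\omega\in\mathbb{R}}\bar\sigma(G(j\omega))$. For $K\in\mathcal{K}$, $P_K$ denotes the unique symmetric positive definite solution of $A_K^\top P+PA_K+Q_K+\gamma^{-2}PDD^\top P=0$ for which $A_K+\gamma^{-2}DD^\top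 P_K$ is Hurwitz. $\|\cdot\|_F$ is the Frobenius norm. *)

(* Defs.v *)
From HB Require Import structures.
From mathcomp Require Import all_boot all_order all_algebra.
From mathcomp Require Import all_classical all_reals all_analysis.
From mathcomp Require Import complex.

Set Implicit Arguments.
Unset Strict Implicit.
Unset Printing Implicit Defensive.

Import Order.TTheory GRing.Theory Num.Theory.
Local Open Scope ring_scope.

Section Defs.
Variable R : realType.

Definition cmx (m n : nat) (M : 'M[R]_(m, n)) : 'M[R[i]]_(m, n) :=
  map_mx (fun x => x%:C%C) M.

Definition hurwitz (n : nat) (A : 'M[R]_n) : Prop :=
  forall lam : R[i], eigenvalue (cmx A) lam -> complex.Re lam < 0.

Definition symmetric (n : nat) (M : 'M[R]_n) : Prop := M^T = M.

Definition posdef (n : nat) (M : 'M[R]_n) : Prop :=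
  symmetric M /\ forall x : 'cV[R]_n, x != 0 -> 0 < (x^T *m M *m x) 0 0.

Definition possemidef (n : nat) (M : 'M[R]_n) : Prop :=
  symmetric M /\ forall x : 'cV[R]_n, 0 <= (x^T *m M *m x) 0 0.

Definition loewner_le (n : nat) (X Y : 'M[R]_n) : Prop := possemidef (Y - X).

Definition ctrmx (m n : nat) (M : 'M[R[i]]_(m, n)) : 'M[R[i]]_(n, m) :=
  map_mx (fun z => z^*%C) M^T.

Definition maxsv (m n : nat) (M : 'M[R[i]]_(m, n)) : R :=
  sup [set Num.sqrt (complex.Re lam) | lam in
        [set lam : R[i] | eigenvalue (ctrmx M *m M) lam]].

Definition Tzw (n m p q : nat) (A : 'M[R]_n) (B : 'M[R]_(n, m))
  (C : 'M[R]_(p, n)) (D : 'M[R]_(n, q)) (E : 'M[R]_(p, m))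
  (K : 'M[R]_(m, n)) (w : R) : 'M[R[i]]_(p, q) :=
  cmx (C - E *m K) *m invmx ((0 +i* w)%C *: 1%:M - cmx (A - B *m K)) *m cmx D.

(* ||T_zw(K)||_{H_infty} < gamma, where the H_infty norm is
   sup_{w in R} maxsv (T_zw(K)(j w)); "sup < gamma" is unfolded as
   "bounded by some c < gamma". *)
Definition hinf_lt (n m p q : nat) (A : 'M[R]_n) (B : 'M[R]_(n, m))
  (C : 'M[R]_(p, n)) (D : 'M[R]_(n, q)) (E : 'M[R]_(p, m))
  (K : 'M[R]_(m, n)) (gamma : R) : Prop :=
  exists2 c : R, c < gamma & forall w : R, maxsv (Tzw A B C D E K w) <= c.

Definition admissible (n m p q : nat) (A : 'M[R]_n) (B : 'M[R]_(n, m))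
  (C : 'M[R]_(p, n)) (D : 'M[R]_(n, q)) (E : 'M[R]_(p, m))
  (gamma : R) (K : 'M[R]_(m, n)) : Prop :=
  hurwitz (A - B *m K) /\ hinf_lt A B C D E K gamma.

Definition frob (m n : nat) (M : 'M[R]_(m, n)) : R :=
  Num.sqrt (\sum_(i < m) \sum_(j < n) M i j ^+ 2).

End Defs.

(* Main.v *)
Require Import Defs.
From HB Require Import structures.
From mathcomp Require Import all_boot all_order all_algebra.
From mathcomp Require Import all_classical all_reals all_analysis.
From mathcomp Require Import complex.
From mathcomp.algebra_tactics Require Import ring.

Import Order.TTheory GRing.Theory Num.Theory numFieldNormedType.Exports.
Local Open Scope ring_scope.
Local Open Scope classical_set_scope.

Set Implicit Arguments. Unset Strict Implicit. Unset Printing Implicit Defensive.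

Ltac mxring := apply/matrixP => ? ?; rewrite !mxE; ring.

Section Core.
Variable C : numClosedFieldType.

Definition adj m n (M : 'M[C]_(m,n)) : 'M[C]_(n,m) := map_mx Num.conj M^T.
Definition herm n (M : 'M[C]_n) := adj M = M.
Definition cpsd n (M : 'M[C]_n) := forall x : 'cV[C]_n, 0 <= (adj x *m M *m x) 0 0.

Lemma adjK m n (M : 'M[C]_(m,n)) : adj (adj M) = M.
Proof. by apply/matrixP=> i j; rewrite !mxE conjCK. Qed.
Lemma adjM m n p (A : 'M[C]_(m,n)) (B : 'M[C]_(n,p)) : adj (A *m B) = adj B *m adj A.
Proof. by rewrite /adj trmx_mul map_mxM. Qed.
Lemma adjD m n (A B : 'M[C]_(m,n)) : adj (A + B) = adj A + adj B.
Proof. by apply/matrixP=> i j; rewrite !mxE rmorphD. Qed.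
Lemma adjN m n (A : 'M[C]_(m,n)) : adj (- A) = - adj A.
Proof. by apply/matrixP=> i j; rewrite !mxE rmorphN. Qed.
Lemma adjB m n (A B : 'M[C]_(m,n)) : adj (A - B) = adj A - adj B.
Proof. by rewrite adjD adjN. Qed.
Lemma adjZ m n a (A : 'M[C]_(m,n)) : adj (a *: A) = a^* *: adj A.
Proof. by apply/matrixP=> i j; rewrite !mxE rmorphM. Qed.
Lemma adj0 m n : adj (0 : 'M[C]_(m,n)) = 0.
Proof. by apply/matrixP=> i j; rewrite !mxE rmorph0. Qed.
Lemma adj_scalar n a : adj (a%:M : 'M[C]_n) = (a^*)%:M.
Proof. by apply/matrixP=> i j; rewrite !mxE rmorphMn eq_sym. Qed.
Lemma adj_block m1 m2 n1 n2 (a : 'M[C]_(m1,n1)) (b : 'M[C]_(m1,n2)) (c : 'M[C]_(m2,n1)) (d : 'M[C]_(m2,n2)) :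
  adj (block_mx a b c d) = block_mx (adj a) (adj c) (adj b) (adj d).
Proof. by rewrite /adj tr_block_mx map_block_mx. Qed.
Lemma adj_col m1 m2 n (a : 'M[C]_(m1,n)) (b : 'M[C]_(m2,n)) :
  adj (col_mx a b) = row_mx (adj a) (adj b).
Proof. by rewrite /adj tr_col_mx map_row_mx. Qed.

Lemma qf_block n (a : 'cV[C]_1) (z : 'cV[C]_n) (w : 'M[C]_1) (w12 : 'M[C]_(1,n)) (w21 : 'M[C]_(n,1)) (W2 : 'M[C]_n) :
  adj (col_mx a z) *m block_mx w w12 w21 W2 *m col_mx a z =
  adj a *m w *m a + adj a *m w12 *m z + adj z *m w21 *m a + adj z *m W2 *m z.
Proof.
rewrite adj_col mul_row_block mul_row_col !mulmxDl.
by rewrite addrACA !addrA.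
Qed.

Lemma cpsd_congr m n (W : 'M[C]_m) (G : 'M[C]_(m,n)) : cpsd W -> cpsd (adj G *m W *m G).
Proof. by move=> hW x; rewrite -!mulmxA !mulmxA -adjM -mulmxA; exact: hW. Qed.

Lemma herm_congr m n (W : 'M[C]_m) (G : 'M[C]_(m,n)) : herm W -> herm (adj G *m W *m G).
Proof. by move=> hW; rewrite /herm !adjM adjK hW mulmxA. Qed.

Lemma cpsd_gram m n (F : 'M[C]_(m,n)) : cpsd (adj F *m F).
Proof.
move=> x; rewrite mulmxA -adjM -mulmxA mxE; apply: sumr_ge0 => i _.
by rewrite /adj !mxE mulrC mul_conjC_ge0.
Qed.

Lemma herm_gram m n (F : 'M[C]_(m,n)) : herm (adj F *m F).
Proof. by rewrite /herm adjM adjK. Qed.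

Lemma ReD' (x y : C) : 'Re (x + y) = 'Re x + 'Re y.
Proof. by rewrite !ReE rmorphD -mulrDl addrACA. Qed.

Lemma Re0 : 'Re (0 : C) = 0.
Proof. by rewrite ReE rmorph0 addr0 mul0r. Qed.

Lemma sylv0 n k (T : 'M[C]_n) (t : C) (v : 'M[C]_(n,k)) :
  is_trig_mx T -> (forall i, 'Re (T i i) < 0) -> 'Re t < 0 ->
  T *m v + t *: v = 0 -> v = 0.
Proof.
move=> Ttrig hT ht e.
have eM : (T + t%:M) *m v = 0 by rewrite mulmxDl mul_scalar_mx.
have trM : is_trig_mx (T + t%:M).
  apply/is_trig_mxP => i j lij; rewrite !mxE (is_trig_mxP Ttrig) // add0r.
  have -> : (i == j) = false by apply/eqP => eij; rewrite eij ltnn in lij.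
  by rewrite mulr0n.
have uM : T + t%:M \in unitmx.
  rewrite unitmxE det_trig // unitfE; apply/prodf_neq0 => i _.
  rewrite !mxE eqxx mulr1n; apply/eqP => h.
  by have := ltrD (hT i) ht; rewrite addr0 -ReD' h Re0 ltxx.
by rewrite -(mulKmx uM v) eM mulmx0.
Qed.


Lemma qf_block_s n (k : C) (z : 'cV[C]_n) (w : 'M[C]_1) (w12 : 'M[C]_(1,n)) (w21 : 'M[C]_(n,1)) (W2 : 'M[C]_n) :
  adj w12 = w21 ->
  (adj (col_mx k%:M z) *m block_mx w w12 w21 W2 *m col_mx k%:M z) 0 0 =
  k^* * w 0 0 * k + k^* * (w12 *m z) 0 0 + ((w12 *m z) 0 0)^* * k + (adj z *m W2 *m z) 0 0.
Proof.
move=> h; rewrite qf_block -h -adjM adj_scalar !mul_scalar_mx !mul_mx_scalar -scalemxAl.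
rewrite !mxE; ring.
Qed.

Lemma cpsd_sub n (w : 'M[C]_1) w12 w21 (W2 : 'M[C]_n) :
  cpsd (block_mx w w12 w21 W2) -> cpsd W2.
Proof.
move=> h z; have := h (col_mx 0 z); rewrite qf_block adj0.
by rewrite !mulmx0 !mul0mx !add0r.
Qed.

Lemma cpsd_corner n (w : 'M[C]_1) w12 w21 (W2 : 'M[C]_n) :
  adj w12 = w21 -> cpsd (block_mx w w12 w21 W2) -> w 0 0 = 0 -> w12 = 0.
Proof.
move=> h hW w0.
have gz : forall z : 'cV[C]_n, (w12 *m z) 0 0 = 0.
  move=> z; set g := (w12 *m z) 0 0; set q := (adj z *m W2 *m z) 0 0.
  have q0 : 0 <= q by exact: cpsd_sub hW z.
  apply/eqP; apply/negP => /negP gn0.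
  have gg : 0 < g * g^* by rewrite mul_conjC_gt0.
  pose r := (q + 1) / (2%:R * (g * g^*)).
  have rr : r^* = r.
    by apply: geC0_conj; rewrite /r divr_ge0 // ?addr_ge0 // mulr_ge0 // ltW.
  have := hW (col_mx (- r * g)%:M z); rewrite qf_block_s // w0.
  rewrite rmorphM rmorphN /= rr -/g -/q.
  have -> : (- r * g^*) * 0 * (- r * g) + (- r * g^*) * g + g^* * (- r * g) + q
            = - (2%:R * (g * g^*)) * r + q by ring.
  rewrite mulNr /r mulrCA mulfV; last by rewrite mulf_neq0 // ?pnatr_eq0 // gt_eqF.
  rewrite mulr1 (_ : - (q + 1) + q = -1); last by ring.
  by rewrite oppr_ge0 ler10.
apply/matrixP => i j; rewrite !ord1 mxE.
have := gz (delta_mx j 0); rewrite -colE mxE => ->.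
by [].
Qed.


Lemma cpsd_blk n (η : C) (y : 'cV[C]_n) (Z : 'M[C]_n) :
  0 <= η -> (η = 0 -> y = 0) -> cpsd Z ->
  cpsd (block_mx η%:M (adj y) y (Z + η^-1 *: (y *m adj y))).
Proof.
move=> η0 hy hZ v; rewrite -[v]vsubmxK; move: (usubmx v) (dsubmx v) => a z.
rewrite [a]mx11_scalar; move: (a 0 0) => k; clear a.
rewrite qf_block_s ?adjK //.
rewrite (_ : (η%:M : 'M[C]_1) 0 0 = η); last by rewrite mxE eqxx mulr1n.
set β := (adj y *m z) 0 0.
have -> : (adj z *m (Z + η^-1 *: (y *m adj y)) *m z) 0 0 =
          (adj z *m Z *m z) 0 0 + η^-1 * (β^* * β).
  rewrite mulmxDr mulmxDl mxE; congr (_ + _).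
  rewrite -scalemxAr -scalemxAl mxE; congr (_ * _).
  rewrite !mulmxA -(mulmxA _ (adj y)) mxE big_ord1; congr (_ * _).
  by rewrite /β -[adj z *m y](adjK) adjM adjK /adj !mxE.
move: (hZ z) => q0; move: ((adj z *m Z *m z) 0 0) q0 => q q0.
have [η0'|ηn0] := eqVneq η 0.
  have β0 : β = 0 by rewrite /β hy // adj0 mul0mx mxE.
  rewrite η0' β0 (_ : k^* * 0 * k + k^* * 0 + 0^* * k + (q + 0^-1 * (0^* * 0)) = q) //.
  by rewrite invr0 rmorph0; ring.
move: β => β.
have ηr : η^* = η := geC0_conj η0.
have -> : k^* * η * k + k^* * β + β^* * k + (q + η^-1 * (β^* * β))
          = η^-1 * ((η * k + β) * (η * k + β)^*) + q.
  rewrite rmorphD rmorphM /= ηr; field; exact: ηn0.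
by rewrite addr_ge0 // mulr_ge0 ?invr_ge0 // mul_conjC_ge0.
Qed.

Lemma lyap_trig n (T : 'M[C]_n) : is_trig_mx T -> (forall i, 'Re (T i i) < 0) ->
  forall Y W : 'M[C]_n, T *m Y + Y *m adj T + W = 0 -> herm W -> cpsd W -> herm Y /\ cpsd Y.
Proof.
move=> Ttrig; move: n T Ttrig; apply: trigsqmx_ind => [|n x c T2 T2trig IH] hT Y W.
  move=> _ _ _; split; first by rewrite /herm !flatmx0.
  by move=> z; rewrite [z]flatmx0 mulmx0 mxE.
have hx : 'Re (x 0 0) < 0 by have := hT (lshift n 0); rewrite block_mxEul.
have hT2 : forall i, 'Re (T2 i i) < 0 by move=> i; have := hT (rshift 1 i); rewrite block_mxEdr.
move=> eq hW pW.
rewrite -[Y]submxK -[W]submxK in eq hW pW *.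
move: (ulsubmx Y) (ursubmx Y) (dlsubmx Y) (drsubmx Y) eq => e u y Y2 eq.
move: (ulsubmx W) (ursubmx W) (dlsubmx W) (drsubmx W) eq hW pW => w w12 w21 W2 eq hW pW.
clear Y W.
have hWh := hW.
rewrite /herm adj_block in hW; case/eq_block_mx: hW => hw h21 h12 hW2.
rewrite adj_block adj0 !mulmx_block !add_block_mx in eq.
case/eq_block_mx: (etrans eq (esym (block_mx0 _ _ _ _ _))) => e11 e12 e21 e22.
rewrite !mul0mx !mulmx0 ?addr0 ?add0r in e11 e12 e21 e22.
move: (mx11_scalar x) (mx11_scalar e) (mx11_scalar w) hx.
move: (x 0 0) (e 0 0) (w 0 0) => s η ω xE eE wE hx; subst x e w.
rewrite adj_scalar in e11 e12 e21.
rewrite !mul_scalar_mx !mul_mx_scalar in e11 e12 e21 e22.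
have e11s : s * η + η * s^* + ω = 0.
  by move/matrixP/(_ 0 0): e11; rewrite !mxE eqxx !mulr1n.
have sRe : s + s^* < 0.
  by move: hx; rewrite ReE pmulr_llt0 // invr_gt0 ltr0n.
have ωE : ω = - (η * (s + s^*)).
  by apply/eqP; rewrite -subr_eq0 -e11s; apply/eqP; ring.
have ω0 : 0 <= ω.
  have := pW (col_mx 1%:M 0); rewrite qf_block_s // conjC1 !mul1r mulr1 mulmx0 !mxE.
  rewrite big1 => [|j _]; last by rewrite !mxE mulr0.
  by rewrite rmorph0 mul0r !addr0 eqxx mulr1n.
have η0 : 0 <= η.
  by move: ω0; rewrite ωE -mulrN pmulr_lge0 // oppr_gt0.
have ηr : η^* = η := geC0_conj η0.
have hsc : 'Re s^* < 0 by rewrite Re_conj.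
have e21' : T2 *m y + s^* *: y = - (η *: c + w21).
  by apply/eqP; rewrite -subr_eq0 opprK -e21; apply/eqP; mxring.
have e12' : T2 *m adj u + s^* *: adj u = - (η *: c + w21).
  move: (congr1 (@adj _ _) e12); rewrite adj0 !adjD !adjZ adjM !adjK ηr h12 => h.
  by apply/eqP; rewrite -subr_eq0 opprK -h; apply/eqP; mxring.
have uE : u = adj y.
  have : T2 *m (adj u - y) + s^* *: (adj u - y) = 0.
    by rewrite mulmxBr scalerBr addrACA -opprD e21' e12' subrr.
  by move/(sylv0 T2trig hT2 hsc)/eqP; rewrite subr_eq0 => /eqP <-; rewrite adjK.
subst u; clear eq e11 e12 e21 e12'.
have pW2 : cpsd W2 := cpsd_sub pW.
have [η0'|ηn0] := eqVneq η 0.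
  have ω0' : ω = 0 by rewrite ωE η0' mul0r oppr0.
  have w120 : w12 = 0.
    by apply: (cpsd_corner h12 pW); rewrite mxE eqxx mulr1n.
  have w210 : w21 = 0 by rewrite -h12 w120 adj0.
  have y0 : y = 0.
    by apply: (sylv0 T2trig hT2 hsc); rewrite e21' η0' w210 scale0r addr0 oppr0.
  rewrite y0 adj0 !mulmx0 !mul0mx !add0r in e22.
  have [hY2 pY2] := IH hT2 _ _ e22 hW2 pW2.
  split.
    by rewrite /herm adj_block adjK adj_scalar ηr hY2.
  have := cpsd_blk η0 (fun _ => y0) pY2.
  by rewrite y0 adj0 mul0mx scaler0 addr0.
have η0s : 0 < η by rewrite lt_def ηn0.
have ηir : (η^-1)^* = η^-1 by rewrite fmorphV /= ηr.
pose Z := Y2 - η^-1 *: (y *m adj y).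
pose G : 'M[C]_(1 + n, n) := col_mx (- η^-1 *: adj y) 1%:M.
have adjG : adj G = row_mx (- η^-1 *: y) 1%:M.
  by rewrite /G adj_col adjZ adjK rmorphN /= ηir adj_scalar conjC1.
have WG : adj G *m block_mx ω%:M w12 w21 W2 *m G =
    (η^-1 * ω * η^-1) *: (y *m adj y) - η^-1 *: (w21 *m adj y) - η^-1 *: (y *m w12) + W2.
  rewrite adjG mul_row_block mul_row_col /G !mulmx1 !mul1mx.
  rewrite !mulmxDl -!scalemxAl !mul_mx_scalar -!scalemxAr !scalerA -!scalemxAl !scalerA.
  mxring.
have F2 : T2 *m y = - (η *: c + s^* *: y + w21).
  by apply/eqP; rewrite -subr_eq0 opprK -[0](subrr (η *: c + w21)) -{1}e21'; apply/eqP; mxring.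
have F3 : adj y *m adj T2 = - (η *: adj c + s *: adj y + w12).
  by rewrite -adjM F2 adjN !adjD !adjZ ηr conjCK h21.
have F1 : T2 *m Y2 = - (c *m adj y + y *m adj c + W2) - Y2 *m adj T2.
  by apply/eqP; rewrite -subr_eq0 -[0]e22; apply/eqP; mxring.
have eqZ : T2 *m Z + Z *m adj T2 + adj G *m block_mx ω%:M w12 w21 W2 *m G = 0.
  rewrite WG /Z mulmxBr mulmxBl -!scalemxAr -!scalemxAl mulmxA F2 -mulmxA F3 F1.
  rewrite mulNmx mulmxN !mulmxDl !mulmxDr -!scalemxAl -!scalemxAr ωE.
  apply/matrixP => ? ?; rewrite !mxE; field; exact: ηn0.
have [hZ pZ] := IH hT2 _ _ eqZ (herm_congr _ (hWh)) (cpsd_congr _ pW).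
have Y2E : Y2 = Z + η^-1 *: (y *m adj y) by rewrite /Z subrK.
split.
  rewrite /herm adj_block adjK adj_scalar ηr; congr block_mx.
  by rewrite Y2E adjD adjZ ηir adjM adjK hZ.
rewrite Y2E; apply: cpsd_blk (ltW η0s) _ pZ.
by move=> h; rewrite h eqxx in ηn0.
Qed.


Lemma eigen_unit n (g : 'M[C]_n) a : eigenvalue g a = ~~ (g - a%:M \in unitmx).
Proof. by rewrite /eigenvalue /eigenspace kermx_eq0 row_free_unit. Qed.

Lemma eigen_tr n (g : 'M[C]_n) a : eigenvalue g^T a = eigenvalue g a.
Proof. by rewrite !eigen_unit -unitmx_tr linearB /= trmxK tr_scalar_mx. Qed.

Lemma eigen_trig n (T : 'M[C]_n) i : is_trig_mx T -> eigenvalue T (T i i).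
Proof.
move=> Tt; rewrite eigen_unit unitmxE det_trig; last first.
  apply/is_trig_mxP => k j lkj; rewrite !mxE (is_trig_mxP Tt) // add0r.
  have -> : (k == j) = false by apply/eqP => ekj; rewrite ekj ltnn in lkj.
  by rewrite mulr0n oppr0.
rewrite unitfE negbK (bigD1 i) //= !mxE eqxx mulr1n subrr mul0r.
by [].
Qed.

Lemma adj_unitary n (P : 'M[C]_n) : P \is unitarymx -> adj P *m P = 1%:M.
Proof.
move=> hP; have := mulVmx (unitarymx_unit hP).
by rewrite invmx_unitary.
Qed.

Lemma lyap_complex n (M : 'M[C]_n) : (forall a, eigenvalue M a -> 'Re a < 0) ->
  forall Y W : 'M[C]_n, M *m Y + Y *m adj M + W = 0 -> herm W -> cpsd W -> herm Y /\ cpsd Y.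
Proof.
case: n M => [|n] M hM Y W eq hW pW.
  split; first by rewrite /herm !flatmx0.
  by move=> z; rewrite [z]flatmx0 mulmx0 mxE.
have [P hP Ptrig] := Schur M (ltn0Sn n).
have {}Ptrig : is_trig_mx (P *m M *m adj P) by rewrite -conjymx.
have PP : P *m adj P = 1%:M by apply/unitarymxP.
have PP' : adj P *m P = 1%:M by apply: adj_unitary.
set T := P *m M *m _ in Ptrig.
have hT : forall i, 'Re (T i i) < 0.
  move=> i; apply: hM; have := eigen_trig i Ptrig.
  rewrite /T -(conjymx _ hP); apply: eigenvalue_conjmx.
    by rewrite submx_full // row_full_unit unitarymx_unit.
  by rewrite row_free_unit unitarymx_unit.
have eq' : T *m (P *m Y *m adj P) + (P *m Y *m adj P) *m adj T + P *m W *m adj P = 0.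
  have -> : T *m (P *m Y *m adj P) + (P *m Y *m adj P) *m adj T + P *m W *m adj P
          = P *m (M *m Y + Y *m adj M + W) *m adj P.
    rewrite /T !adjM adjK !mulmxA -[P *m M *m adj P *m P]mulmxA PP' mulmx1.
    rewrite -[P *m Y *m adj P *m P]mulmxA PP' mulmx1.
    by rewrite !mulmxDr !mulmxDl !mulmxA.
  by rewrite eq mulmx0 mul0mx.
have hW' : herm (P *m W *m adj P) by have := herm_congr (adj P) hW; rewrite adjK.
have pW' : cpsd (P *m W *m adj P) by have := cpsd_congr (adj P) pW; rewrite adjK.
have [hY pY] := lyap_trig Ptrig hT eq' hW' pW'.
have YE : Y = adj P *m (P *m Y *m adj P) *m P.
  by rewrite !mulmxA PP' mul1mx -mulmxA PP' mulmx1.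
rewrite YE; split; [exact: herm_congr | exact: cpsd_congr].
Qed.

End Core.


Section Real.
Variable R : rcfType.
Local Notation C := (R[i]).

Definition cmx' m n (M : 'M[R]_(m,n)) : 'M[C]_(m,n) := map_mx (fun x => x%:C%C) M.
Definition hurwitz' n (A : 'M[R]_n) : Prop :=
  forall lam : C, eigenvalue (cmx' A) lam -> complex.Re lam < 0.

Lemma cmxE m n (M : 'M[R]_(m,n)) : cmx' M = map_mx (real_complex R) M.
Proof. by []. Qed.

Lemma cmxM m n p (A : 'M[R]_(m,n)) (B : 'M[R]_(n,p)) : cmx' (A *m B) = cmx' A *m cmx' B.
Proof. by rewrite !cmxE map_mxM. Qed.
Lemma cmxD m n (A B : 'M[R]_(m,n)) : cmx' (A + B) = cmx' A + cmx' B.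
Proof. by rewrite !cmxE map_mxD. Qed.
Lemma cmxN m n (A : 'M[R]_(m,n)) : cmx' (- A) = - cmx' A.
Proof. by rewrite !cmxE map_mxN. Qed.
Lemma cmxB m n (A B : 'M[R]_(m,n)) : cmx' (A - B) = cmx' A - cmx' B.
Proof. by rewrite cmxD cmxN. Qed.
Lemma cmxZ m n a (A : 'M[R]_(m,n)) : cmx' (a *: A) = a%:C%C *: cmx' A.
Proof. by apply/matrixP => i j; rewrite !mxE rmorphM. Qed.
Lemma cmxT m n (A : 'M[R]_(m,n)) : cmx' A^T = (cmx' A)^T.
Proof. by rewrite !cmxE map_trmx. Qed.
Lemma cmx0 m n : cmx' (0 : 'M[R]_(m,n)) = 0.
Proof. by rewrite cmxE map_mx0. Qed.
Lemma adj_cmx m n (A : 'M[R]_(m,n)) : adj (cmx' A) = cmx' A^T.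
Proof. by apply/matrixP => i j; rewrite /adj !mxE; exact: conjc_real. Qed.
Lemma cmx_inj m n (A B : 'M[R]_(m,n)) : cmx' A = cmx' B -> A = B.
Proof. by rewrite !cmxE => /map_mx_inj; apply; exact: complexI. Qed.

Lemma Re_cmp (a : C) : ('Re a < 0) = (complex.Re a < 0).
Proof. by rewrite -complexRe ltcR. Qed.

Lemma herm_cmx n (W : 'M[R]_n) : W^T = W -> herm (cmx' W).
Proof. by move=> h; rewrite /herm adj_cmx h. Qed.

Lemma cpsd_gram_cmx k n (F : 'M[R]_(k,n)) : cpsd (cmx' (F^T *m F)).
Proof. by rewrite cmxM -adj_cmx; exact: cpsd_gram. Qed.

Lemma cpsd_scale n (c : R) (M : 'M[R]_n) : 0 <= c -> cpsd (cmx' M) -> cpsd (cmx' (c *: M)).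
Proof.
move=> c0 hM x; rewrite cmxZ -scalemxAr -scalemxAl mxE mulr_ge0 //.
by rewrite lecR.
Qed.

Lemma cpsd_add n (M N : 'M[C]_n) : cpsd M -> cpsd N -> cpsd (M + N).
Proof. by move=> hM hN x; rewrite mulmxDr mulmxDl mxE addr_ge0. Qed.

Lemma cpsd_real n (M : 'M[R]_n) : cpsd (cmx' M) -> forall x : 'cV[R]_n, 0 <= (x^T *m M *m x) 0 0.
Proof.
move=> h x; have := h (cmx' x); rewrite adj_cmx -!cmxM /cmx' mxE.
by rewrite lecR.
Qed.

Lemma lyap_real n (A X W : 'M[R]_n) : hurwitz' A -> A^T *m X + X *m A + W = 0 ->
  W^T = W -> cpsd (cmx' W) -> X^T = X /\ cpsd (cmx' X).
Proof.
move=> hA eq hW pW.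
have hM : forall a, eigenvalue (cmx' A^T) a -> 'Re a < 0.
  by move=> a; rewrite cmxT eigen_tr Re_cmp; exact: hA.
have eq' : cmx' A^T *m cmx' X + cmx' X *m adj (cmx' A^T) + cmx' W = 0.
  by rewrite adj_cmx trmxK -!cmxM -!cmxD eq cmx0.
have [hX pX] := lyap_complex hM eq' (herm_cmx hW) pW.
split=> //; apply: cmx_inj; rewrite -adj_cmx; exact: hX.
Qed.

Lemma adj_gram_eq0 n (v : 'cV[C]_n) : (adj v *m v) 0 0 = 0 -> v = 0.
Proof.
rewrite mxE => /eqP; rewrite psumr_eq0 => [/allP h|i _]; last first.
  by rewrite /adj !mxE mulrC mul_conjC_ge0.
apply/matrixP => i j; rewrite ord1 mxE; apply/eqP.
by have := h i (mem_index_enum i); rewrite implyTb /adj !mxE mulrC mul_conjC_eq0.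
Qed.

Lemma hurwitz_step n k (A B D W : 'M[R]_n) (F : 'M[R]_(k,n)) (H : 'M[R]_(n,k)) :
  hurwitz' B -> B = A + H *m F -> cpsd (cmx' D) -> cpsd (cmx' W) ->
  A^T *m D + D *m A + F^T *m F + W = 0 -> hurwitz' A.
Proof.
move=> hB BE pD pW eq lam; rewrite -eigen_tr => /eigenvalueP [v vA vn0].
rewrite ltNge; apply/negP => Rel.
pose x := v^T.
have Ax : cmx' A *m x = lam *: x.
  by rewrite /x -[cmx' A]trmxK -trmx_mul vA linearZ.
have xn0 : x != 0 by rewrite /x trmx_eq0.
have Ax' : adj x *m cmx' A^T = lam^* *: adj x.
  by rewrite -adj_cmx -adjM Ax adjZ.
have qfD : forall M N : 'M[C]_n, (adj x *m (M + N) *m x) 0 0 =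
    (adj x *m M *m x) 0 0 + (adj x *m N *m x) 0 0.
  by move=> M N; rewrite mulmxDr mulmxDl mxE.
have := congr1 (fun M => (adj x *m cmx' M *m x) 0 0) eq.
rewrite /= cmx0 mulmx0 mul0mx [X in _ = X]mxE !cmxD !qfD.
set d := (adj x *m cmx' D *m x) 0 0.
set w := (adj x *m cmx' W *m x) 0 0.
set f := (adj (cmx' F *m x) *m (cmx' F *m x)) 0 0.
have -> : (adj x *m cmx' (A^T *m D) *m x) 0 0 = lam^* * d.
  by rewrite cmxM mulmxA Ax' -scalemxAl -scalemxAl mxE.
have -> : (adj x *m cmx' (D *m A) *m x) 0 0 = lam * d.
  by rewrite cmxM -mulmxA -(mulmxA _ (cmx' A)) Ax -!scalemxAr mulmxA mxE.
have -> : (adj x *m cmx' (F^T *m F) *m x) 0 0 = f.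
  by rewrite cmxM -adj_cmx mulmxA -adjM -mulmxA.
have d0 : 0 <= d := pD x.
have w0 : 0 <= w := pW x.
have f0 : 0 <= f by rewrite /f mxE sumr_ge0 // => i _; rewrite /adj !mxE mulrC mul_conjC_ge0.
have l0 : 0 <= lam^* + lam.
  have : 0 <= 'Re lam by rewrite real_leNgt ?Creal_Re ?real0 // Re_cmp -leNgt.
  by rewrite ReE pmulr_lge0 ?invr_gt0 ?ltr0n // addrC.
move=> e.
have f00 : f = 0.
  apply/eqP; rewrite eq_le f0 andbT.
  have : f <= lam^* * d + lam * d + f + w.
    by rewrite -mulrDl [_ + f]addrC -addrA lerDl addr_ge0 ?mulr_ge0.
  by rewrite e.
have Fx : cmx' F *m x = 0 by apply: adj_gram_eq0.
have Bx : cmx' B *m x = lam *: x by rewrite BE cmxD cmxM mulmxDl -mulmxA Fx mulmx0 addr0.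
have : complex.Re lam < 0.
  apply: hB; rewrite -eigen_tr; apply/eigenvalueP; exists x^T; last by rewrite trmx_eq0.
  by rewrite -trmx_mul Bx linearZ.
by rewrite ltNge Rel.
Qed.

End Real.


Section TR.
Variable R : pzRingType.
Lemma trZ m n a (A : 'M[R]_(m,n)) : (a *: A)^T = a *: A^T.
Proof. by apply/matrixP => i j; rewrite !mxE. Qed.
Lemma trD m n (A B : 'M[R]_(m,n)) : (A + B)^T = A^T + B^T.
Proof. by apply/matrixP => i j; rewrite !mxE. Qed.
Lemma trN m n (A : 'M[R]_(m,n)) : (- A)^T = - A^T.
Proof. by apply/matrixP => i j; rewrite !mxE. Qed.
Lemma trB m n (A B : 'M[R]_(m,n)) : (A - B)^T = A^T - B^T.
Proof. by rewrite trD trN. Qed.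
End TR.

Ltac mxnorm := rewrite ?(trD, trN, trZ, trmx_mul, trmxK,
   mulmxDl, mulmxDr, mulNmx, mulmxN, scalerA, mulmxA,
   scalerDr, scaleNr, scalerN);
   rewrite -?(scalemxAl, scalemxAr) ?(scalerA, mulmxA).

Section Alg.
Variable R : realFieldType.

Lemma E1_alg n q (AK PK P Q : 'M[R]_n) (D : 'M[R]_(n,q)) (L : 'M[R]_(q,n)) (g : R) :
  g != 0 -> PK^T = PK ->
  AK^T *m PK + PK *m AK + Q + g^-2 *: (PK *m D *m D^T *m PK) = 0 ->
  (AK + D *m L)^T *m P + P *m (AK + D *m L) + Q - g^+2 *: (L^T *m L) = 0 ->
  (AK + D *m L)^T *m (PK - P) + (PK - P) *m (AK + D *m L)
   + g^+2 *: ((L - g^-2 *: (D^T *m PK))^T *m (L - g^-2 *: (D^T *m PK))) = 0.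
Proof.
move=> g0 hPK h1 h2.
transitivity ((AK^T *m PK + PK *m AK + Q + g^-2 *: (PK *m D *m D^T *m PK)) -
  ((AK + D *m L)^T *m P + P *m (AK + D *m L) + Q - g^+2 *: (L^T *m L))); last first.
  by rewrite h1 h2 subrr.
mxnorm; rewrite ?hPK.
apply/matrixP => i j; rewrite !mxE; field; exact: g0.
Qed.


Lemma E3_alg n q (As Δ : 'M[R]_n) (D : 'M[R]_(n,q)) (a : 'M[R]_(q,n)) (g : R) :
  g != 0 -> Δ^T = Δ ->
  (As + D *m a)^T *m Δ + Δ *m (As + D *m a) + g^+2 *: (a^T *m a) = 0 ->
  (As + D *m (- g^-2 *: (D^T *m Δ)))^T *m Δ + Δ *m (As + D *m (- g^-2 *: (D^T *m Δ)))
  + g^+2 *: ((a - (- g^-2 *: (D^T *m Δ)))^T *m (a - (- g^-2 *: (D^T *m Δ)))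
             + (- g^-2 *: (D^T *m Δ))^T *m (- g^-2 *: (D^T *m Δ))) = 0.
Proof.
move=> g0 hD h1.
transitivity ((As + D *m a)^T *m Δ + Δ *m (As + D *m a) + g^+2 *: (a^T *m a)); last first.
  exact: h1.
mxnorm; rewrite ?hD.
apply/matrixP => i j; rewrite !mxE; field; exact: g0.
Qed.

Lemma E4_alg n q (A' Δ Δ' : 'M[R]_n) (a a' : 'M[R]_(q,n)) (g : R) :
  A'^T *m Δ + Δ *m A' + g^+2 *: ((a - a')^T *m (a - a') + a'^T *m a') = 0 ->
  A'^T *m Δ' + Δ' *m A' + g^+2 *: (a'^T *m a') = 0 ->
  A'^T *m (Δ - Δ') + (Δ - Δ') *m A' + g^+2 *: ((a - a')^T *m (a - a')) = 0.
Proof.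
move=> h1 h2.
transitivity ((A'^T *m Δ + Δ *m A' + g^+2 *: ((a - a')^T *m (a - a') + a'^T *m a')) -
  (A'^T *m Δ' + Δ' *m A' + g^+2 *: (a'^T *m a'))); last by rewrite h1 h2 subrr.
mxnorm.
apply/matrixP => i j; rewrite !mxE; ring.
Qed.

Lemma E5_alg n q (As Δ : 'M[R]_n) (D : 'M[R]_(n,q)) (g : R) :
  g != 0 -> Δ^T = Δ ->
  (As + D *m (- g^-2 *: (D^T *m Δ)))^T *m Δ + Δ *m (As + D *m (- g^-2 *: (D^T *m Δ)))
  + g^+2 *: ((- g^-2 *: (D^T *m Δ))^T *m (- g^-2 *: (D^T *m Δ))) = 0 ->
  As^T *m (- Δ) + (- Δ) *m As + g^-2 *: ((D^T *m Δ)^T *m (D^T *m Δ)) = 0.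
Proof.
move=> g0 hD h1.
transitivity (- ((As + D *m (- g^-2 *: (D^T *m Δ)))^T *m Δ + Δ *m (As + D *m (- g^-2 *: (D^T *m Δ)))
  + g^+2 *: ((- g^-2 *: (D^T *m Δ))^T *m (- g^-2 *: (D^T *m Δ))))); last by rewrite h1 oppr0.
mxnorm; rewrite ?hD.
apply/matrixP => i j; rewrite !mxE; field; exact: g0.
Qed.

End Alg.


Section Ana.
Variable R : realType.

Lemma cvg_sum_ord p (u : nat -> 'I_p -> R) (v : 'I_p -> R) :
  (forall l, (fun j => u j l) @ \oo --> v l) ->
  (fun j => \sum_(l < p) u j l) @ \oo --> \sum_(l < p) v l.
Proof.
elim: p u v => [|p IH] u v h.
  rewrite big_ord0; under eq_fun do rewrite big_ord0; exact: cvg_cst.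
rewrite big_ord_recr /=; under eq_fun do rewrite big_ord_recr /=.
apply: cvgD; last exact: h.
exact: (IH (fun j l => u j (widen_ord (leqnSn p) l))).
Qed.

Definition mxlim m n (f : nat -> 'M[R]_(m,n)) (M : 'M[R]_(m,n)) :=
  forall i k, (fun j => f j i k) @ \oo --> M i k.

Lemma mxlim_cst m n (M : 'M[R]_(m,n)) : mxlim (fun=> M) M.
Proof. by move=> i k; exact: cvg_cst. Qed.

Lemma mxlimD m n (f g : nat -> 'M[R]_(m,n)) M N :
  mxlim f M -> mxlim g N -> mxlim (fun j => f j + g j) (M + N).
Proof.
move=> hf hg i k; rewrite mxE; under eq_fun do rewrite mxE.
exact: cvgD.
Qed.

Lemma mxlimN m n (f : nat -> 'M[R]_(m,n)) M :
  mxlim f M -> mxlim (fun j => - f j) (- M).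
Proof.
move=> hf i k; rewrite mxE; under eq_fun do rewrite mxE.
exact: cvgN.
Qed.

Lemma mxlimB m n (f g : nat -> 'M[R]_(m,n)) M N :
  mxlim f M -> mxlim g N -> mxlim (fun j => f j - g j) (M - N).
Proof. by move=> hf hg; apply: mxlimD => //; exact: mxlimN. Qed.

Lemma mxlimZ m n (c : R) (f : nat -> 'M[R]_(m,n)) M :
  mxlim f M -> mxlim (fun j => c *: f j) (c *: M).
Proof.
move=> hf i k; rewrite mxE; under eq_fun do rewrite mxE.
exact: cvgMl_tmp.
Qed.

Lemma mxlimT m n (f : nat -> 'M[R]_(m,n)) M :
  mxlim f M -> mxlim (fun j => (f j)^T) M^T.
Proof.
move=> hf i k; rewrite mxE; under eq_fun do rewrite mxE.
exact: hf.
Qed.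

Lemma mxlimM m n p (f : nat -> 'M[R]_(m,n)) (g : nat -> 'M[R]_(n,p)) M N :
  mxlim f M -> mxlim g N -> mxlim (fun j => f j *m g j) (M *m N).
Proof.
move=> hf hg i k; rewrite mxE; under eq_fun do rewrite mxE.
apply: cvg_sum_ord => l; exact: cvgM.
Qed.

Lemma mxlimS m n (f : nat -> 'M[R]_(m,n)) M :
  mxlim f M -> mxlim (fun j => f j.+1) M.
Proof. by move=> hf i k; rewrite (cvg_shiftS (fun j => f j i k)); exact: hf. Qed.

Lemma mxlim0 m n (f : nat -> 'M[R]_(m,n)) M :
  (forall j, f j = 0) -> mxlim f M -> M = 0.
Proof.
move=> h0 hf; apply/matrixP => i k; rewrite mxE.
have := hf i k; under eq_fun do rewrite h0 mxE.
move=> h; rewrite -(cvg_lim _ h) //; exact: lim_cst.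
Qed.


Definition qf n (x : 'cV[R]_n) (M : 'M[R]_n) := (x^T *m M *m x) 0 0.

Lemma bl_delta n (M : 'M[R]_n) i k : ((delta_mx i 0 : 'cV[R]_n)^T *m M *m (delta_mx k 0 : 'cV[R]_n)) 0 0 = M i k.
Proof. by rewrite trmx_delta -rowE -colE !mxE. Qed.

Lemma entryD m n (A B : 'M[R]_(m,n)) i j : (A + B) i j = A i j + B i j.
Proof. by rewrite mxE. Qed.

Lemma polar n (M : 'M[R]_n) i k : M^T = M ->
  M i k = (qf (delta_mx i 0 + delta_mx k 0) M - qf (delta_mx i 0) M - qf (delta_mx k 0) M) / 2
  :> R.
Proof.
move=> hM; rewrite /qf trD !mulmxDl !mulmxDr !entryD !bl_delta.
have -> : M k i = M i k by rewrite -{1}hM mxE.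
by field.
Qed.

Lemma qf_lim n (S : nat -> 'M[R]_n) M x : mxlim S M ->
  (fun j => qf x (S j)) @ \oo --> qf x M.
Proof.
move=> h; rewrite /qf.
have : mxlim (fun j => x^T *m S j *m x) (x^T *m M *m x).
  by apply: mxlimM; [apply: mxlimM => //; exact: mxlim_cst | exact: mxlim_cst].
by move/(_ 0 0).
Qed.

Lemma mono_psd_lim n (S : nat -> 'M[R]_n) :
  (forall j, (S j)^T = S j) -> (forall j x, 0 <= qf x (S j)) ->
  (forall j x, qf x (S j.+1) <= qf x (S j)) ->
  exists M, [/\ mxlim S M, M^T = M & forall x, 0 <= qf x M].
Proof.
move=> hs hp hm.
have hc : forall x, cvgn (fun j => qf x (S j)).
  move=> x; apply: nonincreasing_is_cvgn.
    by apply/nonincreasing_seqP => j; exact: hm.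
  by exists 0 => _ [j _ <-]; exact: hp.
pose Lm x := limn (fun j => qf x (S j)).
pose M := \matrix_(i, k) ((Lm (delta_mx i 0 + delta_mx k 0) - Lm (delta_mx i 0) - Lm (delta_mx k 0)) / 2).
have hc' : forall x, (fun j => qf x (S j)) @ \oo --> Lm x.
  by move=> x; exact: hc.
have hl : mxlim S M.
  move=> i k; rewrite mxE.
  have -> : (fun j => S j i k) = (fun j => (qf (delta_mx i 0 + delta_mx k 0) (S j)
     - qf (delta_mx i 0) (S j) - qf (delta_mx k 0) (S j)) / 2).
    by apply: funext => j; exact: polar.
  apply: cvgMr_tmp; apply: cvgB; first apply: cvgB.
  1-3: exact (hc' _).
exists M; split => //.
  by apply/matrixP => i k; rewrite !mxE [delta_mx k 0 + _]addrC [in RHS]addrAC.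
move=> x; refine (cvgr_to_ge (qf_lim (x:=x) hl) _).
by apply: nearW => j; exact: hp.
Qed.

Lemma psd_antisym n (M : 'M[R]_n) : M^T = M -> (forall x, 0 <= qf x M) ->
  (forall x, 0 <= qf x (- M)) -> M = 0.
Proof.
move=> hs h1 h2.
have h0 : forall x, qf x M = 0.
  move=> x; apply/eqP; rewrite eq_le h1 andbT.
  by have := h2 x; rewrite /qf mulmxN mulNmx mxE oppr_ge0.
by apply/matrixP => i k; rewrite (polar i k hs) !h0 mxE !subrr mul0r.
Qed.


Lemma frob_lim n (S : nat -> 'M[R]_n) : mxlim S 0 ->
  (fun j => frob (S j)) @ \oo --> (0 : R^o).
Proof.
move=> h.
have hsum : (fun j => \sum_(i < n) \sum_(k < n) S j i k ^+ 2) @ \oo -->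
    \sum_(i < n) \sum_(k < n) ((0 : R) * 0).
  apply: cvg_sum_ord => i; apply: cvg_sum_ord => k.
  under eq_fun do rewrite expr2.
  have := h i k; rewrite mxE => hik.
  exact: cvgM.
have e0 : \sum_(i < n) \sum_(k < n) ((0 : R) * 0) = 0.
  by rewrite big1 // => i _; rewrite big1 // => k _; rewrite mulr0.
rewrite e0 in hsum.
have := @continuous_cvg _ _ _ _ _ _ _ _ (@sqrt_continuous R 0) hsum.
rewrite sqrtr0 => hs.
exact (hs _).
Qed.

End Ana.

Unset Implicit Arguments.

Theorem lemma6 (R : realType) (n m p q : nat)
  (A : 'M[R]_n) (B : 'M[R]_(n, m)) (C : 'M[R]_(p, n)) (D : 'M[R]_(n, q))
  (E : 'M[R]_(p, m)) (gamma : R)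
  (hQ : posdef (C^T *m C)) (hEC : E^T *m C = 0) (hR : posdef (E^T *m E))
  (hgamma : 0 < gamma)
  (K : 'M[R]_(m, n)) (hK : admissible A B C D E gamma K)
  (PK : 'M[R]_n)
  (hPK_pd : posdef PK)
  (hPK_ric : (A - B *m K)^T *m PK + PK *m (A - B *m K)
             + (C^T *m C + K^T *m (E^T *m E) *m K)
             + gamma^-2 *: (PK *m D *m D^T *m PK) = 0)
  (hPK_stab : hurwitz (A - B *m K + gamma^-2 *: (D *m D^T *m PK)))
  (L : nat -> 'M[R]_(q, n)) (P : nat -> 'M[R]_n)
  (hL0 : hurwitz (A - B *m K + D *m L 0%N))
  (hP : forall j : nat,
      (A - B *m K + D *m L j)^T *m P j + P j *m (A - B *m K + D *m L j)
      + (C^T *m C + K^T *m (E^T *m E) *m K)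
      - gamma ^+ 2 *: ((L j)^T *m L j) = 0)
  (hL : forall j : nat, L j.+1 = gamma^-2 *: ((D^T) *m P j)) :
  (forall j : nat, (0 < j)%N -> hurwitz (A - B *m K + D *m L j)) /\
  (forall j : nat, loewner_le (P j) (P j.+1) /\ loewner_le (P j) PK) /\
  ((fun j => frob (P j - PK)) @ \oo --> (0 : R^o)).
Proof.

Proof.
have g0 : gamma != 0 by rewrite gt_eqF.
have hPKs : PK^T = PK := hPK_pd.1.
move: (A - B *m K) hPK_ric hPK_stab hL0 hP => AK hPK_ric hPK_stab hL0 hP.
move: (C^T *m C + K^T *m (E^T *m E) *m K) hPK_ric hP => Q hPK_ric hP.
have hurE : forall k (M : 'M[R]_k), hurwitz M = hurwitz' M by [].
rewrite hurE in hPK_stab hL0.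
pose Ls := gamma^-2 *: (D^T *m PK).
pose As := AK + D *m Ls.
have hAs : hurwitz' As.
  have -> : As = AK + gamma^-2 *: (D *m D^T *m PK) by rewrite /As /Ls -scalemxAr mulmxA.
  exact: hPK_stab.
pose Δ j := PK - P j.
pose a j := L j - Ls.
have AjE j : AK + D *m L j = As + D *m a j.
  by rewrite /As /a mulmxBr -addrA [D *m Ls + _]addrCA subrr addr0.
have E1 j : (As + D *m a j)^T *m Δ j + Δ j *m (As + D *m a j) + gamma^+2 *: ((a j)^T *m a j) = 0.
  rewrite -AjE; exact: (E1_alg g0 hPKs hPK_ric (hP j)).
have E2 j : a j.+1 = - gamma^-2 *: (D^T *m Δ j).
  rewrite /a hL /Ls /Δ mulmxBr; apply/matrixP => i k; rewrite !mxE; ring.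
have Wsym (M : 'M[R]_(q,n)) : (gamma^+2 *: (M^T *m M))^T = gamma^+2 *: (M^T *m M).
  by rewrite trZ trmx_mul trmxK.
have Wpsd (M : 'M[R]_(q,n)) : cpsd (cmx' (gamma^+2 *: (M^T *m M))).
  by apply: cpsd_scale; [exact: sqr_ge0 | exact: cpsd_gram_cmx].
have IND : forall j, hurwitz' (As + D *m a j) /\ (Δ j)^T = Δ j /\ cpsd (cmx' (Δ j)).
  elim=> [|j [hj [sj pj]]].
    have h0 : hurwitz' (As + D *m a 0) by move: hL0; rewrite (AjE 0).
    Timeout 30 (have [sX pX] := lyap_real h0 (E1 0) (Wsym _) (Wpsd _)).
    by [].
  Timeout 30 (have E3 := E3_alg g0 sj (E1 j)).
  Timeout 30 rewrite -E2 in E3.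
  have hj1 : hurwitz' (As + D *m a j.+1).
    apply: (@hurwitz_step _ _ _ _ As (Δ j) (gamma^+2 *: ((a j - a j.+1)^T *m (a j - a j.+1)))
       (gamma *: a j.+1) (- gamma^-1 *: D) hAs _ pj (Wpsd _)).
      Timeout 20 rewrite -scalemxAl -scalemxAr scalerA mulNr mulVf // scaleN1r.
      Timeout 20 by rewrite addrK.
    apply: (etrans _ E3).
    rewrite trZ -scalemxAl -scalemxAr scalerA -expr2 scalerDr -!addrA.
    by congr (_ + (_ + _)); rewrite addrC.
  by have [sX pX] := lyap_real hj1 (E1 j.+1) (Wsym _) (Wpsd _).
have MON : forall j, (Δ j - Δ j.+1)^T = (Δ j - Δ j.+1) /\ cpsd (cmx' (Δ j - Δ j.+1)).
  move=> j; have [hj [sj pj]] := IND j; have [hj1 _] := IND j.+1.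
  have E3 := E3_alg g0 sj (E1 j); rewrite -E2 in E3.
  have E4 := E4_alg E3 (E1 j.+1).
  exact: lyap_real hj1 E4 (Wsym _) (Wpsd _).
split.
  by move=> j _; rewrite hurE AjE; exact: (IND j).1.
split.
  move=> j; rewrite /loewner_le /possemidef /symmetric; split.
    have -> : P j.+1 - P j = Δ j - Δ j.+1.
      by rewrite /Δ; apply/matrixP => ? ?; rewrite !mxE; ring.
    have [sX pX] := MON j; split => //; exact: cpsd_real.
  have [_ [sX pX]] := IND j; split => //; exact: cpsd_real.
have sΔ : forall j, (Δ j)^T = Δ j by move=> j; exact: (IND j).2.1.
have pΔ : forall j x, 0 <= qf x (Δ j) by move=> j x; exact: cpsd_real (IND j).2.2 x.
have hmon : forall j x, qf x (Δ j.+1) <= qf x (Δ j).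
  move=> j x; have := cpsd_real (MON j).2 x.
  rewrite mulmxBr mulmxBl; set u := x^T *m Δ j *m x; set v := x^T *m Δ j.+1 *m x.
  by rewrite mxE [(- v) 0 0]mxE subr_ge0.
have [Dinf [hl sD pD]] := mono_psd_lim sΔ pΔ hmon.
have hlS := mxlimS hl.
have FΔ : forall j, (As + D *m (- gamma^-2 *: (D^T *m Δ j)))^T *m Δ j.+1
   + Δ j.+1 *m (As + D *m (- gamma^-2 *: (D^T *m Δ j)))
   + gamma^+2 *: ((- gamma^-2 *: (D^T *m Δ j))^T *m (- gamma^-2 *: (D^T *m Δ j))) = 0.
  by move=> j; rewrite -E2; exact: E1 j.+1.
have Flim : mxlim (fun j => (As + D *m (- gamma^-2 *: (D^T *m Δ j)))^T *m Δ j.+1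
   + Δ j.+1 *m (As + D *m (- gamma^-2 *: (D^T *m Δ j)))
   + gamma^+2 *: ((- gamma^-2 *: (D^T *m Δ j))^T *m (- gamma^-2 *: (D^T *m Δ j))))
  ((As + D *m (- gamma^-2 *: (D^T *m Dinf)))^T *m Dinf
   + Dinf *m (As + D *m (- gamma^-2 *: (D^T *m Dinf)))
   + gamma^+2 *: ((- gamma^-2 *: (D^T *m Dinf))^T *m (- gamma^-2 *: (D^T *m Dinf)))).
  by repeat first [ exact: mxlim_cst | exact: hl | exact: hlS | apply: mxlimD
    | apply: mxlimM | apply: mxlimZ | apply: mxlimT ].
have F0 := mxlim0 FΔ Flim.
have E5 := E5_alg g0 sD F0.
have WsymD : (gamma^-2 *: ((D^T *m Dinf)^T *m (D^T *m Dinf)))^T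
   = gamma^-2 *: ((D^T *m Dinf)^T *m (D^T *m Dinf)) by rewrite trZ trmx_mul trmxK.
have WpsdD : cpsd (cmx' (gamma^-2 *: ((D^T *m Dinf)^T *m (D^T *m Dinf)))).
  by apply: cpsd_scale; [rewrite invr_ge0 sqr_ge0 | exact: cpsd_gram_cmx].
have [sN pN] := lyap_real hAs E5 WsymD WpsdD.
have D0 : Dinf = 0 := psd_antisym sD pD (fun x => cpsd_real pN x).
rewrite D0 in hl.
have hl' : mxlim (fun j => P j - PK) 0.
  have -> : (fun j => P j - PK) = (fun j => - Δ j) by apply: funext => j; rewrite /Δ opprB.
  by rewrite -oppr0; apply: mxlimN.
exact: frob_lim hl'.
Qed.
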